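(* Let $a,b>0$ with $a\ne b$ and $\nu\in(0,1)$. Then $$\widetilde r(\nu)\big(\sqrt a-\sqrt b\big)^2\le a\nabla_\nu b-L_\nu(a,b)\le \widetilde R(\nu)\big(\sqrt a-\sqrt b\big)^2$$ and $$K(a,b)^{\widetilde r(\nu)}\,a\sharp_\nu b\le I_\nu(a,b)\le K(a,b)^{\widetilde R(\nu)}\,a\sharp_\nu b .$$
   Context: $a\nabla_\nu b:=(1-\nu)a+\nu b$, $a\sharp_\nu b:=a^{1-\nu}b^\nu$. Weighted logarithmic mean: $L_\nu(a,b):=\frac{1}{\log a-\log b}\left\{\frac{1-\nu}{\nu}(a-a^{1-\nu}b^\nu)+\frac{\nu}{1-\nu}(a^{1-\nu}b^\nu-b)\right\}$. Kantorovich constant: $K(a,b):=\frac{(a+b)^2}{4ab}$. Weighted identric mean: $$I_\nu(a,b):=\frac1e\,\big(a\nabla_\nu b\big)^{\frac{(1-2\nu)(a\nabla_\nu b)}{\nu(1-\nu)(b-a)}}\left(\frac{b^{\frac{\nu b}{1-\nu}}}{a^{\frac{(1-\nu)a}{\nu}}}\right)^{\frac{1}{b-a}}.$$ For $\lambda\in[0,1]$ let $r_1(\lambda)=\min\{\nu\lambda,1-\nu\lambda\}$, $r_2(\lambda)=\min\{(1-\nu)\lambda,1-(1-\nu)\lambda\}$, $R_1(\lambda)=\max\{\nu\lambda,1-\nu\lambda\}$, $R_2(\lambda)=\max\{(1-\nu)\lambda,1-(1-\nu)\lambda\}$, and $\widetilde r(\nu):=\int_0^1((1-\nu)r_1(\lambda)+\nu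 r_2(\lambda))d\lambda$, $\widetilde R(\nu):=\int_0^1((1-\nu)R_1(\lambda)+\nu R_2(\lambda))d\lambda$. *)

(* Defs.v *)
From Stdlib Require Import Reals.
From Coquelicot Require Import Coquelicot.
Open Scope R_scope.

Definition wam (nu a b : R) : R := (1 - nu) * a + nu * b.
Definition wgm (nu a b : R) : R := Rpower a (1 - nu) * Rpower b nu.

Definition wlm (nu a b : R) : R :=
  / (ln a - ln b) *
  ((1 - nu) / nu * (a - wgm nu a b) + nu / (1 - nu) * (wgm nu a b - b)).

Definition Kant (a b : R) : R := (a + b) ^ 2 / (4 * a * b).

Definition wim (nu a b : R) : R :=
  / exp 1 *
  Rpower (wam nu a b)
    ((1 - 2 * nu) * wam nu a b / (nu * (1 - nu) * (b - a))) *
  Rpower (Rpower b (nu * b / (1 - nu)) / Rpower a ((1 - nu) * a / nu))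
    (/ (b - a)).

Definition r1 (nu l : R) : R := Rmin (nu * l) (1 - nu * l).
Definition r2 (nu l : R) : R := Rmin ((1 - nu) * l) (1 - (1 - nu) * l).
Definition R1 (nu l : R) : R := Rmax (nu * l) (1 - nu * l).
Definition R2 (nu l : R) : R := Rmax ((1 - nu) * l) (1 - (1 - nu) * l).

Definition rtilde (nu : R) : R :=
  RInt (fun l => (1 - nu) * r1 nu l + nu * r2 nu l) 0 1.
Definition Rtilde (nu : R) : R :=
  RInt (fun l => (1 - nu) * R1 nu l + nu * R2 nu l) 0 1.

(* Main.v *)
Require Import Defs.
From Stdlib Require Import Reals Lra Psatz.
From Coquelicot Require Import Coquelicot.
Require Import Defs.
Open Scope R_scope.

Lemma exp_mono x y : x <= y -> exp x <= exp y.
Proof. intros [H|H]; [left; apply exp_increasing; exact H| subst; lra]. Qed.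

Lemma ln_le_m1 z : 0 < z -> ln z <= z - 1.
Proof. intros Hz. pose proof (exp_ineq1_le (ln z)). rewrite exp_ln in H; lra. Qed.

Lemma conc s x y : 0 < x -> 0 < y -> 0 <= s <= 1 ->
  (1-s)*ln x + s*ln y <= ln ((1-s)*x + s*y).
Proof.
  intros Hx Hy Hs. set (m := (1-s)*x + s*y).
  assert (Hm : 0 < m) by (unfold m; nra).
  pose proof (ln_le_m1 (x/m) ltac:(apply Rdiv_lt_0_compat; lra)) as H1.
  pose proof (ln_le_m1 (y/m) ltac:(apply Rdiv_lt_0_compat; lra)) as H2.
  rewrite ln_div in H1, H2 by lra.
  assert (E : (1-s)*(x/m - 1) + s*(y/m-1) = 0) by (unfold m in *; field; lra).
  assert (H3 : (1-s)*(ln x - ln m) <= (1-s)*(x/m-1)) by (apply Rmult_le_compat_l; lra).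
  assert (H4 : s*(ln y - ln m) <= s*(y/m-1)) by (apply Rmult_le_compat_l; lra).
  lra.
Qed.

Definition Af (a b t : R) := (1-t)*a + t*b.
Definition Ef (a b t : R) := exp (ln a + t*(ln b - ln a)).

Lemma lnsq a b : 0 < a -> 0 < b -> ln (sqrt a * sqrt b) = (ln a + ln b)/2.
Proof.
  intros Ha Hb.
  assert (Sa: 0 < sqrt a) by (apply sqrt_lt_R0; lra).
  assert (Sb: 0 < sqrt b) by (apply sqrt_lt_R0; lra).
  assert (E1: ln a = 2 * ln (sqrt a)).
  { rewrite <- (sqrt_sqrt a) at 1 by lra. rewrite ln_mult by lra. ring. }
  assert (E2: ln b = 2 * ln (sqrt b)).
  { rewrite <- (sqrt_sqrt b) at 1 by lra. rewrite ln_mult by lra. ring. }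
  rewrite ln_mult by lra. lra.
Qed.

Lemma LA_half a b t : 0 < a -> 0 < b -> 0 <= t <= 1/2 ->
  t * (sqrt a - sqrt b)^2 <= Af a b t - Ef a b t <= (1-t) * (sqrt a - sqrt b)^2.
Proof.
  intros Ha Hb Ht.
  assert (Sa: 0 < sqrt a) by (apply sqrt_lt_R0; lra).
  assert (Sb: 0 < sqrt b) by (apply sqrt_lt_R0; lra).
  assert (Qa: sqrt a * sqrt a = a) by (apply sqrt_sqrt; lra).
  assert (Qb: sqrt b * sqrt b = b) by (apply sqrt_sqrt; lra).
  assert (Sab: 0 < sqrt a * sqrt b) by nra.
  assert (Q : (sqrt a - sqrt b)^2 = a + b - 2*(sqrt a * sqrt b)) by nra.
  rewrite Q. unfold Af. split.
  - pose proof (conc (2*t) a (sqrt a * sqrt b) Ha ltac:(nra) ltac:(lra)) as H.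
    rewrite lnsq in H by lra.
    apply exp_mono in H.
    assert (P: 0 < (1 - 2 * t) * a + 2 * t * (sqrt a * sqrt b)) by (destruct (Rle_lt_dec t 0); nra).
    rewrite (exp_ln _ P) in H.
    unfold Ef.
    replace (ln a + t*(ln b - ln a)) with ((1 - 2*t)*ln a + 2*t*((ln a + ln b)/2)) by field.
    lra.
  - set (E := Ef a b t).
    assert (HE : 0 < E) by apply exp_pos.
    set (s := (1-2*t)/(2-2*t)).
    assert (Hs : 0 <= s <= 1).
    { assert (Hs2: s*(2-2*t) = 1-2*t) by (unfold s; field; lra). nra. }
    pose proof (conc s E b HE Hb Hs) as H.
    assert (lnE: ln E = ln a + t*(ln b - ln a)) by (unfold E, Ef; apply ln_exp). rewrite lnE in H.
    replace ((1 - s) * (ln a + t * (ln b - ln a)) + s * ln b) with ((ln a + ln b)/2) in H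
      by (unfold s; field; lra).
    rewrite <- lnsq in H by lra.
    apply exp_mono in H. rewrite !exp_ln in H by (try nra; unfold s; nra).
    assert (H2 : (2-2*t) * (sqrt a * sqrt b) <= E + (1-2*t)*b).
    { replace (E + (1-2*t)*b) with ((2-2*t)*((1 - s) * E + s * b)) by (unfold s; field; lra).
      apply Rmult_le_compat_l; lra. }
    fold E. nra.
Qed.

Lemma lnK a b : 0 < a -> 0 < b ->
  ln (Kant a b) = 2 * ln ((a+b)/2) - ln a - ln b.
Proof.
  intros Ha Hb. unfold Kant.
  replace ((a + b) ^ 2 / (4 * a * b)) with (((a+b)/2) * ((a+b)/2) / (a*b)) by (field; lra).
  rewrite ln_div, !ln_mult by nra. ring.
Qed.

Lemma LB_half a b t : 0 < a -> 0 < b -> 0 <= t <= 1/2 ->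
  t * ln (Kant a b) <= ln (Af a b t) - (ln a + t*(ln b - ln a)) <= (1-t) * ln (Kant a b).
Proof.
  intros Ha Hb Ht. rewrite lnK by lra. unfold Af. split.
  - pose proof (conc (2*t) a ((a+b)/2) Ha ltac:(lra) ltac:(lra)) as H.
    replace ((1 - 2 * t) * a + 2 * t * ((a + b) / 2)) with ((1-t)*a + t*b) in H by field.
    lra.
  - set (s := (1-2*t)/(2-2*t)).
    assert (Hs2: s*(2-2*t) = 1-2*t) by (unfold s; field; lra).
    assert (Hs : 0 <= s <= 1) by nra.
    assert (HA : 0 < (1-t)*a + t*b) by nra.
    pose proof (conc s _ b HA Hb Hs) as H.
    replace ((1 - s) * ((1 - t) * a + t * b) + s * b) with ((a+b)/2) in H by (unfold s; field; lra).
    assert (H2 : ln ((1-t)*a + t*b) + (1-2*t) * ln b <= (2-2*t) * ln ((a+b)/2)).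
    { replace (ln ((1-t)*a + t*b) + (1-2*t) * ln b) with
        ((2-2*t)*((1 - s) * ln ((1 - t) * a + t * b) + s * ln b)) by (unfold s; field; lra).
      apply Rmult_le_compat_l; lra. }
    lra.
Qed.

Lemma LA_full a b t : 0 < a -> 0 < b -> 0 <= t <= 1 ->
  Rmin t (1-t) * (sqrt a - sqrt b)^2 <= Af a b t - Ef a b t <= Rmax t (1-t) * (sqrt a - sqrt b)^2.
Proof.
  intros Ha Hb Ht. destruct (Rle_lt_dec t (1/2)).
  - rewrite Rmin_left, Rmax_right by lra. apply LA_half; lra.
  - rewrite Rmin_right, Rmax_left by lra.
    pose proof (LA_half b a (1-t) Hb Ha ltac:(lra)) as H.
    replace (Af b a (1-t)) with (Af a b t) in H by (unfold Af; ring).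
    replace (Ef b a (1-t)) with (Ef a b t) in H by (unfold Ef; f_equal; ring).
    replace ((sqrt b - sqrt a)^2) with ((sqrt a - sqrt b)^2) in H by ring.
    replace (1 - (1-t)) with t in H by ring. exact H.
Qed.

Lemma LB_full a b t : 0 < a -> 0 < b -> 0 <= t <= 1 ->
  Rmin t (1-t) * ln (Kant a b) <= ln (Af a b t) - (ln a + t*(ln b - ln a)) <= Rmax t (1-t) * ln (Kant a b).
Proof.
  intros Ha Hb Ht. destruct (Rle_lt_dec t (1/2)).
  - rewrite Rmin_left, Rmax_right by lra. apply LB_half; lra.
  - rewrite Rmin_right, Rmax_left by lra.
    pose proof (LB_half b a (1-t) Hb Ha ltac:(lra)) as H.
    replace (Af b a (1-t)) with (Af a b t) in H by (unfold Af; ring).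
    replace (Kant b a) with (Kant a b) in H by (unfold Kant; f_equal; ring).
    replace (ln b + (1 - t) * (ln a - ln b)) with (ln a + t*(ln b - ln a)) in H by ring.
    replace (1 - (1-t)) with t in H by ring. exact H.
Qed.

Lemma Rmin_formula (u v : R) : (u + v - Rabs (u - v)) / 2 = Rmin u v.
Proof. unfold Rmin. destruct (Rle_dec u v).
    - rewrite Rabs_left1 by lra. field.
    - rewrite Rabs_right by lra. field. Qed.
Lemma Rmax_formula (u v : R) : (u + v + Rabs (u - v)) / 2 = Rmax u v.
Proof. unfold Rmax. destruct (Rle_dec u v).
    - rewrite Rabs_left1 by lra. field.
    - rewrite Rabs_right by lra. field. Qed.

Lemma cont_Rmin (f g : R -> R) x : continuous f x -> continuous g x ->
  continuous (fun y => Rmin (f y) (g y)) x.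
Proof.
  intros Hf Hg.
  apply continuous_ext with (fun y => (f y + g y - Rabs (f y - g y)) / 2).
  { intros y. apply Rmin_formula. }
  apply (continuous_mult (fun y => f y + g y - Rabs (f y - g y)) (fun _ => /2)).
  2: apply continuous_const.
  apply (continuous_plus (fun y => f y + g y) (fun y => - Rabs (f y - g y))).
  - apply (continuous_plus f g); auto.
  - apply (continuous_opp (fun y => Rabs (f y - g y))).
    apply continuous_Rabs_comp.
    apply (continuous_plus f (fun y => - g y)); auto.
    apply (continuous_opp g); auto.
Qed.

Lemma cont_Rmax (f g : R -> R) x : continuous f x -> continuous g x ->
  continuous (fun y => Rmax (f y) (g y)) x.
Proof.
  intros Hf Hg.
  apply continuous_ext with (fun y => (f y + g y + Rabs (f y - g y)) / 2).
  { intros y. apply Rmax_formula. }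
  apply (continuous_mult (fun y => f y + g y + Rabs (f y - g y)) (fun _ => /2)).
  2: apply continuous_const.
  apply (continuous_plus (fun y => f y + g y) (fun y => Rabs (f y - g y))).
  - apply (continuous_plus f g); auto.
  - apply continuous_Rabs_comp.
    apply (continuous_plus f (fun y => - g y)); auto.
    apply (continuous_opp g); auto.
Qed.

Lemma cont_lin (c k : R) x : continuous (fun l => c + k * l) x.
Proof.
  apply (continuous_plus (fun _ => c) (fun l => k*l)). apply continuous_const.
  apply (continuous_mult (fun _ => k) (fun l => l)). apply continuous_const. apply continuous_id.
Qed.

Lemma cont_kl k x : continuous (fun l : R => k * l) x.
Proof. apply (continuous_mult (fun _ => k) (fun l => l)). apply continuous_const. apply continuous_id. Qed.
Lemma cont_ckl c k x : continuous (fun l : R => c - k * l) x.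
Proof. apply (continuous_plus (fun _ => c) (fun l => - (k*l))). apply continuous_const.
  apply (continuous_opp (fun l => k*l)). apply cont_kl. Qed.

Lemma cont_comb (f g : R -> R) u v x : continuous f x -> continuous g x ->
  continuous (fun l => u * f l + v * g l) x.
Proof. intros Hf Hg.
  apply (continuous_plus (fun l => u * f l) (fun l => v * g l)).
  apply (continuous_mult (fun _ => u) f); auto; apply continuous_const.
  apply (continuous_mult (fun _ => v) g); auto; apply continuous_const. Qed.

Lemma cont_rint nu x : continuous (fun l => (1 - nu) * r1 nu l + nu * r2 nu l) x.
Proof. apply cont_comb; unfold r1, r2; apply cont_Rmin; first [apply cont_kl | apply cont_ckl]. Qed.
Lemma cont_Rint nu x : continuous (fun l => (1 - nu) * R1 nu l + nu * R2 nu l) x.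
Proof. apply cont_comb; unfold R1, R2; apply cont_Rmax; first [apply cont_kl | apply cont_ckl]. Qed.

Definition Fint a b nu l :=
  (1-nu)*(Af a b (nu*l) - Ef a b (nu*l)) + nu*(Af a b (1-(1-nu)*l) - Ef a b (1-(1-nu)*l)).
Definition Phi a b nu l :=
  (1-nu)*(a*l + (b-a)*nu*l^2/2 - Ef a b (nu*l)/(nu*(ln b - ln a)))
  + nu*(b*l - (1-nu)*(b-a)*l^2/2 + Ef a b (1-(1-nu)*l)/((1-nu)*(ln b - ln a))).

Lemma Fint_RInt a b nu : 0 < a -> 0 < b -> a <> b -> 0 < nu < 1 ->
  is_RInt (Fint a b nu) 0 1 (Phi a b nu 1 - Phi a b nu 0).
Proof.
  intros Ha Hb Hab Hnu.
  assert (Hd : ln b - ln a <> 0).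
  { intro H. apply Hab. apply ln_inv; lra. }
  apply (is_RInt_derive (Phi a b nu) (Fint a b nu)).
  - intros x _. unfold Phi, Fint, Af, Ef. auto_derive. auto.
    replace (1 + - ((1 - nu) * x)) with (1 - (1-nu)*x) by ring. field. lra.
  - intros x _. apply (ex_derive_continuous (Fint a b nu)). unfold Fint, Af, Ef. auto_derive. auto.
Qed.

Lemma Ef_nu a b nu : Ef a b nu = wgm nu a b.
Proof. unfold Ef, wgm, Rpower. rewrite <- exp_plus. f_equal. ring. Qed.
Lemma Ef_0 a b : 0 < a -> Ef a b 0 = a.
Proof. intros. unfold Ef. replace (ln a + 0 * (ln b - ln a)) with (ln a) by ring. apply exp_ln; auto. Qed.
Lemma Ef_1 a b : 0 < b -> Ef a b 1 = b.
Proof. intros. unfold Ef. replace (ln a + 1 * (ln b - ln a)) with (ln b) by ring. apply exp_ln; auto. Qed.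

Lemma Phi_val a b nu : 0 < a -> 0 < b -> a <> b -> 0 < nu < 1 ->
  Phi a b nu 1 - Phi a b nu 0 = wam nu a b - wlm nu a b.
Proof.
  intros Ha Hb Hab Hnu.
  assert (Hd : ln b - ln a <> 0).
  { intro H. apply Hab. apply ln_inv; lra. }
  unfold Phi.
  replace (nu*1) with nu by ring. replace (1 - (1-nu)*1) with nu by ring.
  replace (nu*0) with 0 by ring. replace (1 - (1-nu)*0) with 1 by ring.
  rewrite Ef_nu, Ef_0, Ef_1 by lra.
  unfold wam, wlm. field. repeat split; lra.
Qed.

Lemma part1 a b nu : 0 < a -> 0 < b -> a <> b -> 0 < nu < 1 ->
  rtilde nu * (sqrt a - sqrt b) ^ 2 <= wam nu a b - wlm nu a b <=
     Rtilde nu * (sqrt a - sqrt b) ^ 2.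
Proof.
  intros Ha Hb Hab Hnu.
  set (q := (sqrt a - sqrt b)^2).
  assert (Hq : 0 <= q) by (unfold q; apply pow2_ge_0).
  pose proof (Fint_RInt a b nu Ha Hb Hab Hnu) as HI.
  assert (HF : RInt (Fint a b nu) 0 1 = wam nu a b - wlm nu a b).
  { rewrite <- Phi_val by auto. apply is_RInt_unique. exact HI. }
  assert (exF : ex_RInt (Fint a b nu) 0 1) by (eexists; exact HI).
  assert (exr : ex_RInt (fun l => (1 - nu) * r1 nu l + nu * r2 nu l) 0 1)
    by (apply (@ex_RInt_continuous R_CompleteNormedModule); intros; apply cont_rint).
  assert (exR : ex_RInt (fun l => (1 - nu) * R1 nu l + nu * R2 nu l) 0 1)
    by (apply (@ex_RInt_continuous R_CompleteNormedModule); intros; apply cont_Rint).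
  assert (Er : RInt (fun l => q * ((1 - nu) * r1 nu l + nu * r2 nu l)) 0 1 = q * rtilde nu)
    by (exact (RInt_scal _ 0 1 q exr)).
  assert (ER : RInt (fun l => q * ((1 - nu) * R1 nu l + nu * R2 nu l)) 0 1 = q * Rtilde nu)
    by (exact (RInt_scal _ 0 1 q exR)).
  rewrite <- HF, (Rmult_comm (rtilde nu)), (Rmult_comm (Rtilde nu)), <- Er, <- ER.
  assert (PW : forall x, 0 < x < 1 ->
    q * ((1 - nu) * r1 nu x + nu * r2 nu x) <= Fint a b nu x <=
    q * ((1 - nu) * R1 nu x + nu * R2 nu x)).
  { intros x Hx.
    pose proof (LA_full a b (nu*x) Ha Hb ltac:(nra)) as H1.
    pose proof (LA_full a b (1-(1-nu)*x) Ha Hb ltac:(nra)) as H2.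
    replace (1 - (1 - (1 - nu) * x)) with ((1-nu)*x) in H2 by ring.
    rewrite (Rmin_comm (1 - (1-nu)*x)), (Rmax_comm (1 - (1-nu)*x)) in H2.
    fold q in H1, H2. unfold Fint, r1, r2, R1, R2.
    assert (W1 : 0 <= 1 - nu) by lra. assert (W2 : 0 <= nu) by lra.
    split.
    - apply Rle_trans with ((1-nu)*(Rmin (nu * x) (1 - nu * x) * q) + nu*(Rmin ((1 - nu) * x) (1 - (1 - nu) * x) * q)).
      right; ring.
      apply Rplus_le_compat; apply Rmult_le_compat_l; lra.
    - apply Rle_trans with ((1-nu)*(Rmax (nu * x) (1 - nu * x) * q) + nu*(Rmax ((1 - nu) * x) (1 - (1 - nu) * x) * q)).
      apply Rplus_le_compat; apply Rmult_le_compat_l; lra.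
      right; ring. }
  split; apply RInt_le; try lra; auto.
  - apply (@ex_RInt_continuous R_CompleteNormedModule); intros; apply (continuous_mult (fun _ => q)); [apply continuous_const| apply cont_rint].
  - intros x Hx; apply PW; auto.
  - apply (@ex_RInt_continuous R_CompleteNormedModule); intros; apply (continuous_mult (fun _ => q)); [apply continuous_const| apply cont_Rint].
  - intros x Hx; apply PW; auto.
Qed.

Definition Hint a b nu l :=
  (1-nu)*(ln (Af a b (nu*l)) - (ln a + nu*l*(ln b - ln a)))
  + nu*(ln (Af a b (1-(1-nu)*l)) - (ln a + (1-(1-nu)*l)*(ln b - ln a))).
Definition Psi a b nu l :=
  (1-nu)*((Af a b (nu*l) * ln (Af a b (nu*l)) - Af a b (nu*l))/(nu*(b-a))
          - (ln a * l + (ln b - ln a)*nu*l^2/2))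
  + nu*(-(Af a b (1-(1-nu)*l) * ln (Af a b (1-(1-nu)*l)) - Af a b (1-(1-nu)*l))/((1-nu)*(b-a))
          - (ln a * l + (ln b - ln a)*(l - (1-nu)*l^2/2))).

Lemma Af_pos a b t : 0 < a -> 0 < b -> 0 <= t <= 1 -> 0 < Af a b t.
Proof. intros. unfold Af. destruct (Rle_lt_dec t 0); nra. Qed.

Lemma Hint_RInt a b nu : 0 < a -> 0 < b -> a <> b -> 0 < nu < 1 ->
  is_RInt (Hint a b nu) 0 1 (Psi a b nu 1 - Psi a b nu 0).
Proof.
  intros Ha Hb Hab Hnu.
  assert (Hc : b - a <> 0) by lra.
  apply (is_RInt_derive (Psi a b nu) (Hint a b nu)).
  - intros x Hx. rewrite Rmin_left, Rmax_right in Hx by lra.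
    pose proof (Af_pos a b (nu*x) Ha Hb ltac:(nra)) as P1.
    pose proof (Af_pos a b (1-(1-nu)*x) Ha Hb ltac:(nra)) as P2.
    unfold Af in P1, P2.
    unfold Psi, Hint, Af. auto_derive.
    + repeat split; auto.
    + replace ((1 + - (nu * x)) * a + nu * x * b) with ((1 - nu * x) * a + nu * x * b) by ring.
      replace ((1 + - (1 + - ((1 - nu) * x))) * a + (1 + - ((1 - nu) * x)) * b)
        with ((1 - (1 - (1 - nu) * x)) * a + (1 - (1 - nu) * x) * b) by ring.
      field. repeat split; lra.
  - intros x Hx. rewrite Rmin_left, Rmax_right in Hx by lra.
    pose proof (Af_pos a b (nu*x) Ha Hb ltac:(nra)) as P1.
    pose proof (Af_pos a b (1-(1-nu)*x) Ha Hb ltac:(nra)) as P2.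
    unfold Af in P1, P2.
    apply (ex_derive_continuous (Hint a b nu)). unfold Hint, Af. auto_derive.
    repeat split; auto.
Qed.

Definition Tw a b nu :=
  -1 + (1 - 2*nu) * wam nu a b / (nu*(1-nu)*(b-a)) * ln (wam nu a b)
  + / (b - a) * (nu*b/(1-nu) * ln b - (1-nu)*a/nu * ln a).

Lemma wim_exp a b nu : 0 < a -> 0 < b -> wim nu a b = exp (Tw a b nu).
Proof.
  intros Ha Hb. unfold wim, Tw, Rpower.
  rewrite ln_div by apply exp_pos. rewrite !ln_exp.
  rewrite !exp_plus. rewrite <- exp_Ropp. reflexivity.
Qed.

Lemma ln_wgm a b nu : 0 < a -> 0 < b -> ln (wgm nu a b) = (1-nu)*ln a + nu * ln b.
Proof. intros. unfold wgm, Rpower. rewrite <- exp_plus, ln_exp. ring. Qed.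

Lemma Psi_val a b nu : 0 < a -> 0 < b -> a <> b -> 0 < nu < 1 ->
  Psi a b nu 1 - Psi a b nu 0 = Tw a b nu - ln (wgm nu a b).
Proof.
  intros Ha Hb Hab Hnu.
  assert (Hc : b - a <> 0) by lra.
  rewrite ln_wgm by auto.
  unfold Psi, Tw.
  replace (Af a b (nu*1)) with (wam nu a b) by (unfold Af, wam; ring).
  replace (Af a b (1 - (1-nu)*1)) with (wam nu a b) by (unfold Af, wam; ring).
  replace (Af a b (nu*0)) with a by (unfold Af; ring).
  replace (Af a b (1 - (1-nu)*0)) with b by (unfold Af; ring).
  set (L := ln (wam nu a b)). unfold wam. field. repeat split; lra.
Qed.

Lemma part2 a b nu : 0 < a -> 0 < b -> a <> b -> 0 < nu < 1 ->
  Rpower (Kant a b) (rtilde nu) * wgm nu a b <= wim nu a b <=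
     Rpower (Kant a b) (Rtilde nu) * wgm nu a b.
Proof.
  intros Ha Hb Hab Hnu.
  set (k := ln (Kant a b)).
  pose proof (Hint_RInt a b nu Ha Hb Hab Hnu) as HI.
  assert (HF : RInt (Hint a b nu) 0 1 = Tw a b nu - ln (wgm nu a b)).
  { rewrite <- Psi_val by auto. apply is_RInt_unique. exact HI. }
  assert (exF : ex_RInt (Hint a b nu) 0 1) by (eexists; exact HI).
  assert (exr : ex_RInt (fun l => (1 - nu) * r1 nu l + nu * r2 nu l) 0 1)
    by (apply (@ex_RInt_continuous R_CompleteNormedModule); intros; apply cont_rint).
  assert (exR : ex_RInt (fun l => (1 - nu) * R1 nu l + nu * R2 nu l) 0 1)
    by (apply (@ex_RInt_continuous R_CompleteNormedModule); intros; apply cont_Rint).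
  assert (Er : RInt (fun l => k * ((1 - nu) * r1 nu l + nu * r2 nu l)) 0 1 = k * rtilde nu)
    by (exact (RInt_scal _ 0 1 k exr)).
  assert (ER : RInt (fun l => k * ((1 - nu) * R1 nu l + nu * R2 nu l)) 0 1 = k * Rtilde nu)
    by (exact (RInt_scal _ 0 1 k exR)).
  assert (PW : forall x, 0 < x < 1 ->
    k * ((1 - nu) * r1 nu x + nu * r2 nu x) <= Hint a b nu x <=
    k * ((1 - nu) * R1 nu x + nu * R2 nu x)).
  { intros x Hx.
    pose proof (LB_full a b (nu*x) Ha Hb ltac:(nra)) as H1.
    pose proof (LB_full a b (1-(1-nu)*x) Ha Hb ltac:(nra)) as H2.
    replace (1 - (1 - (1 - nu) * x)) with ((1-nu)*x) in H2 by ring.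
    rewrite (Rmin_comm (1 - (1-nu)*x)), (Rmax_comm (1 - (1-nu)*x)) in H2.
    fold k in H1, H2. unfold Hint, r1, r2, R1, R2.
    assert (W1 : 0 <= 1 - nu) by lra. assert (W2 : 0 <= nu) by lra.
    split.
    - apply Rle_trans with ((1-nu)*(Rmin (nu * x) (1 - nu * x) * k) + nu*(Rmin ((1 - nu) * x) (1 - (1 - nu) * x) * k)).
      right; ring.
      apply Rplus_le_compat; apply Rmult_le_compat_l; lra.
    - apply Rle_trans with ((1-nu)*(Rmax (nu * x) (1 - nu * x) * k) + nu*(Rmax ((1 - nu) * x) (1 - (1 - nu) * x) * k)).
      apply Rplus_le_compat; apply Rmult_le_compat_l; lra.
      right; ring. }
  assert (I1 : k * rtilde nu <= Tw a b nu - ln (wgm nu a b)).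
  { rewrite <- HF, <- Er. apply RInt_le; try lra; auto.
    - apply (@ex_RInt_continuous R_CompleteNormedModule); intros; apply (continuous_mult (fun _ => k)); [apply continuous_const| apply cont_rint].
    - intros x Hx; apply PW; auto. }
  assert (I2 : Tw a b nu - ln (wgm nu a b) <= k * Rtilde nu).
  { rewrite <- HF, <- ER. apply RInt_le; try lra; auto.
    - apply (@ex_RInt_continuous R_CompleteNormedModule); intros; apply (continuous_mult (fun _ => k)); [apply continuous_const| apply cont_Rint].
    - intros x Hx; apply PW; auto. }
  assert (Gp : 0 < wgm nu a b) by (unfold wgm, Rpower; apply Rmult_lt_0_compat; apply exp_pos).
  rewrite wim_exp by auto.
  unfold Rpower at 1 2. fold k.
  rewrite <- (exp_ln (wgm nu a b)) at 1 2 by exact Gp.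
  rewrite <- !exp_plus.
  split; apply exp_mono; lra.
Qed.

Theorem corollary2p20 (a b nu : R) :
  0 < a -> 0 < b -> a <> b -> 0 < nu < 1 ->
  (rtilde nu * (sqrt a - sqrt b) ^ 2 <= wam nu a b - wlm nu a b <=
     Rtilde nu * (sqrt a - sqrt b) ^ 2) /\
  (Rpower (Kant a b) (rtilde nu) * wgm nu a b <= wim nu a b <=
     Rpower (Kant a b) (Rtilde nu) * wgm nu a b).
Proof.
  intros Ha Hb Hab Hnu. split; [apply part1 | apply part2]; auto.
Qed.
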